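(* For every permutation $\sigma$ and every Cayley permutation $y$, $$\mathcal{F}(\sigma)=\gamma\bigl(\mathrm{Modasc}[\sigma^{-1}]\bigr)\qquad\text{and}\qquad \gamma\bigl(\mathrm{Modasc}[y]\bigr)=\mathcal{F}\bigl(\gamma(y)\bigr).$$ In other words, the set of Fishburn permutations avoiding $\sigma$ is the image under $\gamma$ of the set of modified ascent sequences avoiding every Cayley permutation in the class $[\sigma^{-1}]$.
   Context: A Cayley permutation of length $n$ is a word $x=x(1)\cdots x(n)$ of positive integers in which every integer from $1$ to $\max(x)$ occurs (the empty word is the unique one of length $0$); $\mathrm{Cay}_n$ is the set of these and $\mathrm{Cay}=\bigcup_n\mathrm{Cay}_n$. Permutations of $[n]$ (in one-line notation) are exactly the Cayley permutations without repeated letters; $\mathcal{S}$ denotes the set of all permutations. A Cayley permutation $y$ of length $k$ is contained in $x$ of length $n$ (written $y\le x$) if there are indices $i_1<\dots<i_k$ with $x(i_s)<x(i_t)\iff y(s)<y(t)$ and $x(i_s)=x(i_t)\iff y(s)=y(t)$ for all $s,t$; otherwise $x$ avoids $y$. For $E\subseteq\mathrm{Cay}$ and a set $P$ of patterns, $E(P)$ is the set of elements of $E$ avoiding every pattern in $P$. For $x\in\mathrm{Cay}_n$, $\gamma(x)\in\mathcal{S}_n$ is obtained by sorting the pairs $(x(i),i)$, $i=1,\dots,n$, in increasing order of first coordinate, breaking ties by decreasing order of second coordinate, and reading off the second coordinates. (For a permutation $\pi$, $\gamma(\pi)=\pi^{-1}$.) Write $x\sim y$ iff $\gamma(x)=\gamma(y)$,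 and let $[y]$ be the equivalence class of $y$. For $E\subseteq\mathrm{Cay}$ and $y\in\mathrm{Cay}$, $E[y]$ denotes the set of $x\in E$ that avoid every element of $[y]$; $\gamma(E)=\{\gamma(x):x\in E\}$. Modified ascent sequences: $\mathrm{Modasc}_0=\{\text{empty word}\}$, $\mathrm{Modasc}_1=\{1\}$, and for $n\ge2$, $x\in\mathrm{Modasc}_n$ iff there is $v\in\mathrm{Modasc}_{n-1}$ with last letter $b$ such that either $x=va$ with $1\le a\le b$, or $x=\tilde v a$ with $b<a\le 2+\mathrm{asc}(v)$, where $\mathrm{asc}(v)$ is the number of $i$ with $v(i)<v(i+1)$ and $\tilde v$ is obtained from $v$ by increasing by one every entry $c\ge a$. $\mathrm{Modasc}=\bigcup_n\mathrm{Modasc}_n\subseteq\mathrm{Cay}$. Fishburn permutations: a permutation $\pi$ of $[n]$ is Fishburn if there are no indices $i$ and $k>i+1$ with $\pi(i)<\pi(i+1)$ and $\pi(k)=\pi(i)-1$ (i.e. $\pi$ avoids the bivincular pattern $(231,\{1\},\{1\})$). $\mathcal{F}$ is the set of Fishburn permutations, and $\mathcal{F}(\sigma)$ the set of those avoiding $\sigma$. (The restriction of $\gamma$ to $\mathrm{Modasc}$ is a bijection onto $\mathcal{F}$.) *)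

(* Defs.v *)
(* Words are sequences of naturals; positions in a seq are
   0-based, letters are the (positive) values. *)
From mathcomp Require Import all_boot.
Set Implicit Arguments. Unset Strict Implicit. Unset Printing Implicit Defensive.

Definition wmax (x : seq nat) : nat := foldr maxn 0 x.

Definition is_cayley (x : seq nat) : bool :=
  all (fun a => 0 < a) x && all (fun j => j \in x) (iota 1 (wmax x)).

Definition is_perm (p : seq nat) : bool := perm_eq p (iota 1 (size p)).

Definition perm_inv (p : seq nat) : seq nat :=
  map (fun j => (index j p).+1) (iota 1 (size p)).

Definition order_iso (a y : seq nat) : Prop :=
  size a = size y /\
  forall s t, s < size y -> t < size y ->
    ((nth 0 a s < nth 0 a t) = (nth 0 y s < nth 0 y t)) /\
    ((nth 0 a s == nth 0 a t) = (nth 0 y s == nth 0 y t)).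

Definition contains (x y : seq nat) : Prop :=
  exists m : bitseq, size m = size x /\ order_iso (mask m x) y.

Definition avoids (x y : seq nat) : Prop := ~ contains x y.

Definition gamma_rel (p q : nat * nat) : bool :=
  (p.1 < q.1) || ((p.1 == q.1) && (q.2 <= p.2)).

Definition gamma (x : seq nat) : seq nat :=
  map snd (sort gamma_rel (zip x (iota 1 (size x)))).

(* E[y] : elements of E avoiding every Cayley permutation z with z ~ y *)
Definition avoid_class (E : seq nat -> Prop) (y : seq nat) (x : seq nat) : Prop :=
  E x /\ forall z, is_cayley z -> gamma z = gamma y -> avoids x z.

Definition asc (v : seq nat) : nat :=
  count (fun p : nat * nat => p.1 < p.2) (zip v (behead v)).

Definition bump_ge (a : nat) (v : seq nat) : seq nat :=
  map (fun c => if a <= c then c.+1 else c) v.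

Inductive modasc : seq nat -> Prop :=
| modasc_nil : modasc [::]
| modasc_one : modasc [:: 1]
| modasc_low v a : modasc v -> 0 < size v ->
    1 <= a -> a <= last 0 v -> modasc (rcons v a)
| modasc_high v a : modasc v -> 0 < size v ->
    last 0 v < a -> a <= (asc v).+2 -> modasc (rcons (bump_ge a v) a).

Definition is_fishburn (p : seq nat) : Prop :=
  is_perm p /\
  ~ (exists i k, i.+1 < k /\ k < size p /\
       nth 0 p i < nth 0 p i.+1 /\ nth 0 p k = nth 0 p i - 1).

Definition fishburn_avoiding (sigma p : seq nat) : Prop :=
  is_fishburn p /\ avoids p sigma.

Definition gamma_image (E : seq nat -> Prop) (p : seq nat) : Prop :=
  exists x, E x /\ gamma x = p.

(* Main.v *)
Require Import Defs.
From mathcomp Require Import all_boot zify.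
Set Implicit Arguments. Unset Strict Implicit. Unset Printing Implicit Defensive.

Definition kl (x : seq nat) : rel nat :=
  fun i j => gamma_rel (nth 0 x i.-1, i) (nth 0 x j.-1, j).

Lemma gr_total : total gamma_rel.
Proof.
move=> [a i] [b j]; rewrite /gamma_rel /=.
case: (ltngtP a b) => //= _; exact: leq_total.
Qed.

Lemma gr_trans : transitive gamma_rel.
Proof.
move=> [a i] [b j] [c k]; rewrite /gamma_rel /=.
case/orP=> [h1|/andP[/eqP<- h1]]; case/orP=> [h2|/andP[/eqP<- h2]].
- by rewrite (ltn_trans h1 h2).
- by rewrite h1.
- by rewrite h2.
- by rewrite eqxx (leq_trans h2 h1) orbT.
Qed.

Lemma gr_anti : antisymmetric gamma_rel.
Proof.
move=> [a i] [b j]; rewrite /gamma_rel /=.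
case: (ltngtP a b) => //= E /andP[h1 h2].
by rewrite E; congr pair; apply/eqP; rewrite eqn_leq h1 h2.
Qed.

Lemma kl_total x : total (kl x).
Proof. by move=> i j; apply: gr_total. Qed.
Lemma kl_trans x : transitive (kl x).
Proof. by move=> i j k; apply: gr_trans. Qed.
Lemma kl_anti x : antisymmetric (kl x).
Proof. by move=> i j /gr_anti [_ ->]. Qed.
Lemma kl_refl x : reflexive (kl x).
Proof. by move=> i; rewrite /kl /gamma_rel /= eqxx leqnn orbT. Qed.

Lemma zip_map_self (f : nat -> nat) (s : seq nat) :
  zip (map f s) s = map (fun i => (f i, i)) s.
Proof. by elim: s => //= a s ->. Qed.

Lemma word_iota (x : seq nat) :
  map (fun i => nth 0 x i.-1) (iota 1 (size x)) = x.
Proof.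
have -> : iota 1 (size x) = map (addn 1) (iota 0 (size x)) by rewrite -iotaDl.
rewrite -map_comp -[RHS](mkseq_nth 0); apply: eq_map => i //.
Qed.

Lemma gammaE x : gamma x = sort (kl x) (iota 1 (size x)).
Proof.
rewrite /gamma -{1}(word_iota x) zip_map_self sort_map -map_comp.
by rewrite map_id.
Qed.

Lemma gamma_perm x : perm_eq (gamma x) (iota 1 (size x)).
Proof. by rewrite gammaE perm_sort. Qed.

Lemma gamma_sorted x : sorted (kl x) (gamma x).
Proof. by rewrite gammaE; apply: sort_sorted; apply: kl_total. Qed.

Lemma gamma_uniq x : uniq (gamma x).
Proof. by rewrite (perm_uniq (gamma_perm x)) iota_uniq. Qed.

Lemma size_gamma x : size (gamma x) = size x.
Proof. by rewrite (perm_size (gamma_perm x)) size_iota. Qed.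

Lemma mem_gamma x i : (i \in gamma x) = (0 < i <= size x).
Proof. by rewrite (perm_mem (gamma_perm x)) mem_iota add1n ltnS. Qed.

Lemma gamma_charac x s : perm_eq s (iota 1 (size x)) -> sorted (kl x) s ->
  gamma x = s.
Proof.
move=> hp hs; apply: (sorted_eq (@kl_trans x) (@kl_anti x)) => //.
  exact: gamma_sorted.
by rewrite (permPl (gamma_perm x)) perm_sym.
Qed.

Lemma sorted_nth_iff (R : rel nat) (s : seq nat) :
  transitive R -> antisymmetric R -> reflexive R -> sorted R s -> uniq s ->
  forall l1 l2, l1 < size s -> l2 < size s ->
  R (nth 0 s l1) (nth 0 s l2) = (l1 <= l2).
Proof.
move=> Rt Ra Rr hs hu l1 l2 h1 h2.
case: (leqP l1 l2) => h.
  by apply: (sorted_leq_nth Rt Rr) => //.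
apply/negbTE/negP => hR.
have hR' : R (nth 0 s l2) (nth 0 s l1) by apply: (sorted_leq_nth Rt Rr); rewrite ?inE // ltnW.
have := Ra _ _ (introT andP (conj hR hR')).
move/eqP; rewrite nth_uniq // => /eqP E; by rewrite E ltnn in h.
Qed.

Lemma count_ltn_iota0 k m : count (fun l => l < k) (iota 0 m) = minn k m.
Proof.
elim: m => [|m IH]; first by rewrite minn0.
rewrite -addn1 iotaD count_cat IH /= add0n.
case: (ltnP m k) => h; lia.
Qed.

Lemma index_count (R : rel nat) (s : seq nat) e :
  transitive R -> antisymmetric R -> reflexive R -> sorted R s -> uniq s ->
  e \in s -> (index e s).+1 = count (R^~ e) s.
Proof.
move=> Rt Ra Rr hs hu he.
have hi : index e s < size s by rewrite index_mem.
rewrite -{2}(mkseq_nth 0 s) /mkseq count_map.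
rewrite (@eq_in_count _ _ (fun l => l < (index e s).+1)); last first.
  move=> l; rewrite mem_iota add0n => /andP[_ hl] /=.
  by rewrite -{1}(nth_index 0 he) (sorted_nth_iff Rt Ra Rr hs hu) // ltnS.
rewrite count_ltn_iota0; lia.
Qed.

Definition ins (j e : nat) (s : seq nat) := take j s ++ e :: drop j s.

Lemma ins_decomp (s : seq nat) e : uniq s -> e \in s ->
  s = ins (index e s) e (filter (predC1 e) s).
Proof.
move=> hu he; rewrite -rem_filter // remE /ins.
have hs : size (take (index e s) s) = index e s.
  by rewrite size_take index_mem he.
rewrite take_size_cat // drop_size_cat //.
by rewrite -{2}(nth_index 0 he) -drop_nth ?index_mem // cat_take_drop.
Qed.

Lemma size_ins j e s : size (ins j e s) = (size s).+1.
Proof. by rewrite /ins size_cat /= size_take size_drop; case: ltnP; lia. Qed.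

Lemma nth_ins j e s l : j <= size s ->
  nth 0 (ins j e s) l = if l < j then nth 0 s l else if l == j then e else nth 0 s l.-1.
Proof.
move=> hj; rewrite /ins nth_cat size_take.
have -> : (if j < size s then j else size s) = j by case: ltnP => //; lia.
case: ltnP => h1; first by rewrite nth_take.
case: eqP => [->|h2]; first by rewrite subnn.
have -> : l - j = (l - j).-1.+1 by lia.
by rewrite /= nth_drop; congr nth; lia.
Qed.

Definition compat (x x' : seq nat) n := forall i j, i < n -> j < n ->
  ((nth 0 x i < nth 0 x j) = (nth 0 x' i < nth 0 x' j)) /\
  ((nth 0 x i == nth 0 x j) = (nth 0 x' i == nth 0 x' j)).

Lemma kl_compat x x' n : compat x x' n ->
  {in [pred i | 0 < i <= n] &, kl x =2 kl x'}.
Proof.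
move=> hc i j; rewrite !inE => /andP[i0 iN] /andP[j0 jN].
rewrite /kl /gamma_rel /=.
have [h1 h2] := hc i.-1 j.-1 ltac:(lia) ltac:(lia).
by rewrite h1 h2.
Qed.

Lemma gamma_transfer x x' s : compat x x' (size x') ->
  perm_eq s (iota 1 (size x')) -> sorted (kl x) s -> gamma x' = s.
Proof.
move=> hc hp hs; apply: gamma_charac => //.
rewrite -(eq_in_sorted (kl_compat hc)) //.
apply/allP => i; rewrite (perm_mem hp) mem_iota inE; lia.
Qed.

Lemma compat_sym x x' n : compat x x' n -> compat x' x n.
Proof. by move=> h i j hi hj; have [-> ->] := h i j hi hj. Qed.

Lemma gamma_compat x x' : size x = size x' -> compat x x' (size x) -> gamma x' = gamma x.
Proof.
move=> hs hc; apply: (@gamma_transfer x); first by rewrite -hs.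
  by rewrite -hs gamma_perm.
exact: gamma_sorted.
Qed.

Lemma iotaSr m n : iota m n.+1 = rcons (iota m n) (m + n).
Proof. by rewrite -addn1 iotaD cats1. Qed.

Lemma gamma_rcons w a :
  gamma (rcons w a) = ins (count (fun c => c < a) w) (size w).+1 (gamma w).
Proof.
set n := size w.
have szr : size (rcons w a) = n.+1 by rewrite size_rcons.
have he : n.+1 \in gamma (rcons w a) by rewrite mem_gamma szr ltnSn.
rewrite {1}(ins_decomp (gamma_uniq _) he).
have -> : filter (predC1 n.+1) (gamma (rcons w a)) = gamma w.
  apply/esym/(@gamma_transfer (rcons w a)).
  - move=> i j hi hj; rewrite !nth_rcons -/n hi hj; by split.
  - have := perm_filter (predC1 n.+1) (gamma_perm (rcons w a)).
    rewrite szr iotaSr filter_rcons /= add1n eqxx /=.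
    rewrite (_ : filter (predC1 n.+1) (iota 1 n) = iota 1 n) //.
    apply/all_filterP/allP => i; rewrite mem_iota /= => hi; apply/eqP; lia.
  - exact/sorted_filter/gamma_sorted/kl_trans.
congr ins.
apply/eqP; rewrite -eqSS; apply/eqP.
rewrite (index_count (@kl_trans _) (@kl_anti _) (@kl_refl _) (gamma_sorted _) (gamma_uniq _) he).
rewrite (permP (gamma_perm _)) szr iotaSr -[rcons (iota 1 n) _]cats1 count_cat /=.
rewrite {2}/kl /gamma_rel /= add1n eqxx leqnn orbT addn1; congr S.
rewrite -{2}(word_iota w) count_map.
apply: eq_in_count => i; rewrite mem_iota => /andP[i0 iN].
rewrite /kl /gamma_rel /= !nth_rcons -/n ltnn eqxx.
have -> : i.-1 < n by lia.
have -> : (n.+1 <= i) = false by lia.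
by rewrite andbF orbF.
Qed.

Lemma asc_cons2 a b s : asc [:: a, b & s] = (a < b) + asc (b :: s).
Proof. by rewrite /asc /=. Qed.

Lemma asc1 a : asc [:: a] = 0.
Proof. by []. Qed.

Lemma asc_rcons v a : 0 < size v ->
  asc (rcons v a) = asc v + (last 0 v < a).
Proof.
elim: v => [|b v IH] //= _.
case: v IH => [|c v] IH /=; first by rewrite asc_cons2 !asc1 addn0.
rewrite asc_cons2 IH // asc_cons2 /=; lia.
Qed.

Definition bmp (a c : nat) := if a <= c then c.+1 else c.

Lemma bmp_lt a c d : (bmp a c < bmp a d) = (c < d).
Proof. rewrite /bmp; case: (leqP a c); case: (leqP a d) => h1 h2; apply/idP/idP => H; lia. Qed.

Lemma bmp_eq a c d : (bmp a c == bmp a d) = (c == d).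
Proof. rewrite /bmp; case: (leqP a c); case: (leqP a d) => h1 h2; apply/eqP/eqP; lia. Qed.

Lemma bmp_inj a : injective (bmp a).
Proof. by move=> c d /eqP; rewrite bmp_eq => /eqP. Qed.

Lemma bmp_neq a c : bmp a c != a.
Proof. rewrite /bmp; case: (leqP a c) => h; apply/eqP; lia. Qed.

Lemma bmp_lta a c : (bmp a c < a) = (c < a).
Proof. rewrite /bmp; case: (leqP a c) => h //; apply/negbTE; rewrite -leqNgt; lia. Qed.

Lemma bump_geE a v : bump_ge a v = map (bmp a) v.
Proof. by []. Qed.

Lemma asc_map_mono (f : nat -> nat) v : (forall c d, (f c < f d) = (c < d)) ->
  asc (map f v) = asc v.
Proof.
move=> hf; elim: v => [|b v IH] //=.
case: v IH => [|c v] IH //=.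
by rewrite !asc_cons2 hf -IH.
Qed.

Lemma nth_rcons_lt v a i : i < size v -> nth 0 (rcons v a) i = nth 0 v i.
Proof. by move=> h; rewrite nth_rcons h. Qed.

Lemma take_rcons_le (v : seq nat) a i : i <= size v -> take i (rcons v a) = take i v.
Proof. by move=> h; rewrite -cats1 takel_cat. Qed.

Definition MF (x : seq nat) := forall i, 0 < i < size x ->
  (nth 0 x i.-1 < nth 0 x i) = (nth 0 x i \notin take i x).

Definition Inv (x : seq nat) :=
  [/\ all (fun c => 0 < c) x, all (fun c => c <= (asc x).+1) x,
      (0 < size x -> forall b, 0 < b <= (asc x).+1 -> b \in x) & MF x].

Lemma last_in v : 0 < size v -> last 0 v \in v.
Proof. by case: v => //= b v _; rewrite mem_last. Qed.

Lemma last_nth0 v : 0 < size v -> last 0 v = nth 0 v (size v).-1.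
Proof. by case: v => //= b v _; rewrite (last_nth 0). Qed.

Lemma nth_rcons_sz (v : seq nat) a : nth 0 (rcons v a) (size v) = a.
Proof. by rewrite nth_rcons ltnn eqxx. Qed.

Lemma nth_rcons_pred (v : seq nat) a : 0 < size v ->
  nth 0 (rcons v a) (size v).-1 = last 0 v.
Proof.
move=> h; rewrite nth_rcons_lt ?last_nth0 //; lia.
Qed.

Lemma last_map0 (f : nat -> nat) v : 0 < size v -> last 0 (map f v) = f (last 0 v).
Proof. by case: v => //= b v _; rewrite last_map. Qed.

Lemma modasc_inv x : modasc x -> Inv x.
Proof.
elim=> {x}.
- split => //; move=> i /=; lia.
- split => //; first by move=> _ b; rewrite /asc /= => hb; rewrite inE; apply/eqP; lia.
  move=> i /=; lia.
- move=> v a _ [I0 I1 I2 I3] sv a1 al.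
  have hl := last_in sv.
  have ascE : asc (rcons v a) = asc v.
    by rewrite asc_rcons // ltnNge al addn0.
  have hlb : last 0 v <= (asc v).+1 by apply: (allP I1).
  split; rewrite ?ascE.
  + by rewrite all_rcons I0 andbT.
  + rewrite all_rcons I1 andbT; lia.
  + by move=> _ b hb; rewrite mem_rcons inE (I2 sv b hb) orbT.
  + move=> i; rewrite size_rcons => hi.
    case: (ltnP i (size v)) => hiv.
      have hi1 : i.-1 < size v by lia.
      rewrite (nth_rcons_lt _ hiv) (nth_rcons_lt _ hi1) (take_rcons_le _ (ltnW hiv)).
      by apply: I3; lia.
    have -> : i = size v by lia.
    rewrite take_rcons_le // nth_rcons_sz nth_rcons_pred //.
    rewrite ltnNge al /= take_size (I2 sv a) //; lia.
- move=> v a _ [I0 I1 I2 I3] sv la ha.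
  have hl := last_in sv.
  have lb : bmp a (last 0 v) = last 0 v by rewrite /bmp leqNgt la.
  have ascE : asc (rcons (bump_ge a v) a) = (asc v).+1.
    rewrite bump_geE asc_rcons ?size_map // last_map0 // lb la addn1.
    by rewrite asc_map_mono //; apply: bmp_lt.
  rewrite /Inv ascE bump_geE; split.
  + rewrite all_rcons; apply/andP; split; first lia.
    by rewrite all_map; apply/allP => c hc /=; have := allP I0 c hc; rewrite /bmp; case: (leqP a c); lia.
  + rewrite all_rcons; apply/andP; split; first lia.
    by rewrite all_map; apply/allP => c hc /=; have := allP I1 c hc; rewrite /bmp; case: (leqP a c); lia.
  + move=> _ b hb; rewrite mem_rcons inE.
    case: (ltngtP b a) => hba.
    * apply/orP; right; apply/mapP; exists b; first by apply: I2 => //; lia.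
      by rewrite /bmp leqNgt hba.
    * apply/orP; right; apply/mapP; exists b.-1; first by apply: I2 => //; lia.
      rewrite /bmp; case: (leqP a b.-1); lia.
    * by apply/orP; left; apply/eqP.
  + move=> i; rewrite size_rcons size_map => hi.
    case: (ltnP i (size v)) => hiv.
      have hi1 : i.-1 < size v by lia.
      have hiv' : i < size (map (bmp a) v) by rewrite size_map.
      have hi1' : i.-1 < size (map (bmp a) v) by rewrite size_map.
      rewrite (nth_rcons_lt _ hiv') (nth_rcons_lt _ hi1') (take_rcons_le _ (ltnW hiv')).
      rewrite !(nth_map 0) //.
      by rewrite bmp_lt -map_take mem_map; [apply: I3; lia | apply: bmp_inj].
    have -> : i = size v by lia.
    have svm : size v = size (map (bmp a) v) by rewrite size_map.
    rewrite svm take_rcons_le // nth_rcons_sz nth_rcons_pred -?svm //.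
    rewrite last_map0 // lb la svm take_size; symmetry; apply/negP => /mapP [c _ hc].
    by move: (bmp_neq a c); rewrite -hc eqxx.
Qed.

Lemma kl_index x a b : a \in gamma x -> b \in gamma x ->
  kl x a b = (index a (gamma x) <= index b (gamma x)).
Proof.
move=> ha hb.
rewrite -{1}(nth_index 0 ha) -{1}(nth_index 0 hb).
apply: sorted_nth_iff; rewrite ?index_mem //.
- exact: kl_trans. - exact: kl_anti. - exact: kl_refl.
- exact: gamma_sorted. - exact: gamma_uniq.
Qed.

Lemma mem_nth_nat (s : seq nat) i : i < size s -> nth 0 s i \in s.
Proof. exact: mem_nth. Qed.

Lemma index_uniq_nat (s : seq nat) i : i < size s -> uniq s -> index (nth 0 s i) s = i.
Proof. exact: index_uniq. Qed.

Lemma gamma_is_perm x : is_perm (gamma x).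
Proof. by rewrite /is_perm size_gamma gamma_perm. Qed.

Lemma B1 x : MF x -> is_fishburn (gamma x).
Proof.
move=> hM; split; first exact: gamma_is_perm.
move=> [i [k [hik [hk [hpq hpk]]]]].
set g := gamma x in hk hpq hpk.
have sg : size g = size x by rewrite size_gamma.
set n := size x in sg.
have hu : uniq g := gamma_uniq x.
set p := nth 0 g i in hpq hpk.
set q := nth 0 g i.+1 in hpq.
have hpin : p \in g by apply: mem_nth_nat; lia.
have hqin : q \in g by apply: mem_nth_nat; lia.
have hkin : nth 0 g k \in g by apply: mem_nth_nat; lia.
have ip : index p g = i by apply: index_uniq_nat => //; lia.
have iq : index q g = i.+1 by apply: index_uniq_nat => //; lia.
have ik : index (nth 0 g k) g = k by apply: index_uniq_nat => //; lia.
have := hpin; rewrite mem_gamma => /andP[p0 pn].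
have := hqin; rewrite mem_gamma => /andP[q0 qn].
have := hkin; rewrite mem_gamma hpk => /andP[k0 kn].
have Rpq : kl x p q by rewrite kl_index // ip iq.
have Rqp1 : kl x q (p - 1) by rewrite -hpk kl_index // iq ik; lia.
have hxpq : nth 0 x p.-1 < nth 0 x q.-1.
  move: Rpq; rewrite /kl /gamma_rel /= => /orP[//|/andP[_ h]]; lia.
have hxqp : nth 0 x q.-1 <= nth 0 x (p - 1).-1.
  move: Rqp1; rewrite /kl /gamma_rel /= => /orP[h|/andP[/eqP -> _]]; lia.
have hM1 := hM p.-1 ltac:(lia).
have e1 : (p.-1).-1 = (p - 1).-1 by lia.
rewrite e1 ltnNge (_ : nth 0 x (p - 1).-1 >= nth 0 x p.-1) /= in hM1; last by lia.
move/negP/negP: (esym hM1) => hin.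
have hsz : p.-1 <= size x by lia.
have hl := hin; rewrite in_take_leq in hl; last exact: hsz.
set l := index (nth 0 x p.-1) x in hl.
have hxl : nth 0 x l = nth 0 x p.-1 by apply: nth_index; apply: mem_take hin.
have hrin : l.+1 \in g by rewrite mem_gamma; lia.
have Rpr : kl x p l.+1 by rewrite /kl /gamma_rel /= hxl eqxx; apply/orP; right; lia.
have Rrp : kl x l.+1 p = false.
  rewrite /kl /gamma_rel /= hxl eqxx ltnn /=; apply/negbTE; lia.
have Rrq : kl x l.+1 q by rewrite /kl /gamma_rel /= hxl hxpq.
rewrite kl_index // ip in Rpr.
rewrite kl_index // ip in Rrp.
rewrite kl_index // iq in Rrq.
have : index l.+1 g != i.+1.
  apply/eqP => E; have : nth 0 g (index l.+1 g) = l.+1 by apply: nth_index.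
  by rewrite E -/q => Eq; move: hxpq; rewrite Eq /= hxl ltnn.
rewrite -/g in Rpr Rrp Rrq; move=> /eqP; lia.
Qed.

Lemma filter_iota_max n : filter (predC1 n.+1) (iota 1 n.+1) = iota 1 n.
Proof.
rewrite iotaSr filter_rcons /= add1n eqxx /=.
apply/all_filterP/allP => i; rewrite mem_iota /= => hi; apply/eqP; lia.
Qed.

Lemma perm_iota_mem (p : seq nat) n i : perm_eq p (iota 1 n) -> (i \in p) = (0 < i <= n).
Proof. by move=> h; rewrite (perm_mem h) mem_iota add1n ltnS. Qed.

Lemma fish_remove p n : is_fishburn p -> size p = n.+1 ->
  is_fishburn (filter (predC1 n.+1) p) /\ size (filter (predC1 n.+1) p) = n /\
  p = ins (index n.+1 p) n.+1 (filter (predC1 n.+1) p).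
Proof.
move=> [hp hF] sp.
rewrite /is_perm sp in hp.
have hu : uniq p by rewrite (perm_uniq hp) iota_uniq.
have he : n.+1 \in p by rewrite (perm_iota_mem _ hp); lia.
set p' := filter _ p.
have hp' : perm_eq p' (iota 1 n).
  by rewrite -filter_iota_max; apply: perm_filter.
have sp' : size p' = n by rewrite (perm_size hp') size_iota.
have D := ins_decomp hu he; rewrite -/p' in D.
split; last by split.
split; first by rewrite /is_perm sp'.
move=> [i [k [hik [hk [h1 h2]]]]]; apply: hF.
set j := index n.+1 p.
have hj : j <= n by rewrite -ltnS -sp /j index_mem.
have hn : forall l, l < n -> nth 0 p' l <= n.
  move=> l hl; have : nth 0 p' l \in p' by apply: mem_nth_nat; lia.
  by rewrite (perm_iota_mem _ hp') => /andP[].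
rewrite D -/j; clearbody j.
have hj' : j <= size p' by rewrite sp'.
have Hn := fun l => @nth_ins j n.+1 p' l hj'.
pose phi l := if l < j then l else l.+1.
have Hphi : forall l, nth 0 (ins j n.+1 p') (phi l) = nth 0 p' l.
  move=> l; rewrite Hn /phi; case: (ltnP l j) => h; first by rewrite h.
  have -> : (l.+1 < j) = false by lia. have -> : (l.+1 == j) = false by lia. done.
have phik : phi k < n.+1 by rewrite /phi; case: (ltnP k j); lia.
case: (ltnP i.+1 j) => c1.
- exists i, (phi k); rewrite size_ins sp' Hphi !Hn.
  have -> : i < j by lia. have -> : i.+1 < j by lia.
  split; last by [].
  rewrite /phi; case: (ltnP k j); lia.
- case: (ltnP i j) => c2.
  + have ej : j = i.+1 by lia.
    exists i, (phi k); rewrite size_ins sp'.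
    have phii : phi k = k.+1 by rewrite /phi; have -> : (k < j) = false by lia.
    rewrite (Hphi k) phii (Hn i) (Hn i.+1) ej ltnSn ltnn eqxx; split; first lia.
    split; first lia. split; last done.
    have := hn i ltac:(lia); lia.
  + exists (phi i), (phi k); rewrite size_ins sp'.
    have e1 : (i < j) = false by lia.
    have e2 : (i.+1 < j) = false by lia.
    have -> : (phi i).+1 = phi i.+1 by rewrite /phi e1 e2.
    rewrite !Hphi; split; last by [].
    have e3 : (k < j) = false by lia.
    rewrite /phi e2 e3; lia.
Qed.

Lemma count_word_iota (v : seq nat) (P : pred nat) :
  count (fun t => P (nth 0 v t.-1)) (iota 1 (size v)) = count P v.
Proof. by rewrite -[in RHS](word_iota v) count_map. Qed.

Lemma eq_in_count_nat (P Q : pred nat) (s : seq nat) :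
  (forall t : nat, t \in s -> P t = Q t) -> count P s = count Q s.
Proof. by move=> h; apply: eq_in_count => t /h. Qed.

Lemma find_a v p : Inv v -> 0 < size v -> is_fishburn p -> size p = (size v).+1 ->
  filter (predC1 (size v).+1) p = gamma v ->
  exists a, 0 < a <= (asc v).+2 /\ count (fun c => c < a) v = index (size v).+1 p.
Proof.
move=> [I0 I1 I2 I3] sv hp sp hf.
set N := size v in sp hf *.
have [_ [_ D]] := fish_remove hp sp.
rewrite hf in D.
set j := index N.+1 p in D *.
have sg : size (gamma v) = N by rewrite size_gamma.
have hj : j <= N by rewrite -ltnS -sp /j index_mem; case: hp => hp' _;
  move: hp'; rewrite /is_perm => /perm_mem ->; rewrite mem_iota; lia.
clearbody j.
have hj' : j <= size (gamma v) by rewrite sg.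
have Hn := fun l => @nth_ins j N.+1 (gamma v) l hj'.
case: j hj hj' Hn D => [|j'] hj hj' Hn D.
  exists 1; split; first lia.
  rewrite (eq_in_count (a2 := pred0)) ?count_pred0 //.
  move=> c hc /=; have := allP I0 c hc; lia.
set g := gamma v in sg Hn D hj'.
have hgv : g = gamma v by [].
clearbody g.
have hu : uniq g by rewrite hgv gamma_uniq.
set c := nth 0 g j'.
have hcin : c \in g by apply: mem_nth_nat; lia.
have := hcin; rewrite hgv mem_gamma -/N => /andP[c0 cN].
have ic : index c g = j' by apply: index_uniq_nat => //; lia.
have [_ hF] := hp.
have hfirst : nth 0 v c.-1 \notin take c.-1 v.
  case: (ltnP 1 c) => c1; last by rewrite (_ : c.-1 = 0) ?take0 //; lia.
  have hc1 : c - 1 \in g by rewrite hgv mem_gamma; lia.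
  set m := index (c - 1) g.
  have hm : m < N by rewrite -sg /m index_mem.
  have nm : nth 0 g m = c - 1 by rewrite /m nth_index.
  have mj : m < j'.
    case: (ltnP m j') => // mj; exfalso.
    have mj2 : m != j' by apply/eqP => E; move: nm; rewrite E -/c; lia.
    apply: hF; exists j', m.+1; rewrite D size_ins sg !Hn.
    have -> : j' < j'.+1 by []. have -> : (j'.+1 < j'.+1) = false by rewrite ltnn.
    rewrite eqxx.
    have -> : (m.+1 < j'.+1) = false by lia. have -> : (m.+1 == j'.+1) = false by lia.
    rewrite /= nm -/c; split; first lia. split; first lia. split; [lia|done].
  have R1 : kl v (c - 1) c by rewrite kl_index -hgv // ic -/m; lia.
  have hlt : nth 0 v (c - 1).-1 < nth 0 v c.-1.
    move: R1; rewrite /kl /gamma_rel /= => /orP[//|/andP[_ h]]; lia.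
  have := I3 c.-1 ltac:(lia).
  have -> : (c.-1).-1 = (c - 1).-1 by lia.
  by rewrite hlt => <-.
set K := nth 0 v c.-1 in hfirst.
have hK : K \in v by apply: mem_nth_nat; lia.
exists K.+1; split; first by have := allP I1 K hK; lia.
have := index_count (@kl_trans v) (@kl_anti v) (@kl_refl v) (gamma_sorted v) (gamma_uniq v) (e := c).
rewrite -hgv ic => ->; last by [].
rewrite hgv (permP (gamma_perm v)) -/N -count_word_iota.
apply: eq_in_count_nat => t; rewrite mem_iota => /andP[t0 tN].
rewrite /kl /gamma_rel /= -/K.
rewrite /kl /gamma_rel /= -/K.
case: (ltngtP (nth 0 v t.-1) K) => h.
- by rewrite ltnS ltnW.
- by rewrite ltnS leqNgt h.
- rewrite h ltnSn /=; symmetry.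
  case: (leqP c t) => // tc; exfalso.
  move/negP: hfirst; apply; rewrite -h.
  have -> : nth 0 v t.-1 = nth 0 (take c.-1 v) t.-1 by rewrite nth_take //; lia.
  apply: mem_nth_nat; rewrite size_take; case: (ltnP c.-1 (size v)); lia.
Qed.

Lemma gamma_bump a v : gamma (bump_ge a v) = gamma v.
Proof.
rewrite bump_geE; apply: gamma_compat; first by rewrite size_map.
move=> i j hi hj; rewrite !(nth_map 0) //.
by rewrite bmp_lt bmp_eq.
Qed.

Lemma count_bump a v : count (fun c => c < a) (bump_ge a v) = count (fun c => c < a) v.
Proof. by rewrite bump_geE count_map; apply: eq_count => c /=; rewrite bmp_lta. Qed.

Lemma B2 n : forall p, is_fishburn p -> size p = n -> exists x, modasc x /\ gamma x = p.
Proof.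
elim: n => [|n IH] p hp sp.
  by exists [::]; split; [constructor | move/size0nil: sp => ->].
case: n IH sp => [|n] IH sp.
  exists [:: 1]; split; first exact: modasc_one.
  case: hp => hp _; move: hp; rewrite /is_perm sp.
  case: p sp => [|c [|d p]] //= _ hc.
  have : c \in [:: 1] by rewrite -(perm_mem hc) inE eqxx.
  by rewrite inE => /eqP ->.
have [hp' [sp' D]] := fish_remove hp sp.
have [v [hv gv]] := IH _ hp' sp'.
have sv : size v = n.+1 by rewrite -size_gamma gv.
have Iv := modasc_inv hv.
have hf : filter (predC1 (size v).+1) p = gamma v by rewrite gv sv.
have [a [ha hc]] := find_a Iv ltac:(lia) hp ltac:(by rewrite sp sv) hf.
case: (leqP a (last 0 v)) => hal.
- exists (rcons v a); split.
    by apply: modasc_low => //; [rewrite sv | lia].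
  by rewrite gamma_rcons hc -hf sv; apply: esym.
- exists (rcons (bump_ge a v) a); split.
    by apply: modasc_high => //; [rewrite sv | lia].
  rewrite gamma_rcons count_bump hc gamma_bump.
  by rewrite bump_geE size_map -hf sv; apply: esym.
Qed.

Lemma sorted_leq_iff (U : seq nat) l1 l2 : sorted ltn U -> l1 < size U -> l2 < size U ->
  (nth 0 U l1 <= nth 0 U l2) = (l1 <= l2).
Proof.
move=> hs h1 h2.
have hu : uniq U by apply: (sorted_uniq ltn_trans ltnn).
have hs' : sorted leq U by apply: sub_sorted hs => a b /ltnW.
apply: (sorted_nth_iff (R := leq)) => //.
- exact: leq_trans. - by move=> a b /andP[h h']; apply/eqP; rewrite eqn_leq h h'.
Qed.

Lemma restrict_gamma x (m : bitseq) : size m = size x ->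
  let U := mask m (iota 1 (size x)) in
  filter (mem U) (gamma x) = map (fun t => nth 0 U t.-1) (gamma (mask m x)).
Proof.
move=> sm U.
set w := mask m x.
set f := fun t => nth 0 U t.-1.
have hU : sorted ltn U by apply: sorted_mask; [exact: ltn_trans | exact: iota_ltn_sorted].
have szU : size U = size w by rewrite /U /w !size_mask ?size_iota.
have hw : w = map (fun i => nth 0 x i.-1) U by rewrite /w /U -[in LHS](word_iota x) -map_mask.
rewrite gammaE filter_sort; [|exact: kl_total|exact: kl_trans].
have -> : filter (mem U) (iota 1 (size x)) = U.
  by rewrite /U -mask_filter ?iota_uniq.
rewrite -[in LHS](word_iota U) -/f sort_map; congr map.
rewrite szU; apply/esym/gamma_charac; first by rewrite perm_sort.
have tot : total (relpre f (kl x)) by move=> a b; apply: kl_total.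
have := sort_sorted tot (iota 1 (size w)).
set srt := sort _ _.
have allP' : all [pred t | 0 < t <= size w] srt.
  by apply/allP => t; rewrite mem_sort mem_iota /=; lia.
move=> hs; rewrite (eq_in_sorted (P := [pred t | 0 < t <= size w]) (e' := relpre f (kl x))) //.
move=> a b; rewrite !inE => /andP[a0 aw] /andP[b0 bw].
rewrite /relpre /kl /gamma_rel /= hw !(nth_map 0) -?szU; try lia.
by rewrite /f sorted_leq_iff // -?szU; try lia; congr orb; congr andb; rewrite sorted_leq_iff -?szU //; try lia.
Qed.

Lemma order_iso_sym a b : order_iso a b -> order_iso b a.
Proof.
move=> [hs h]; split => // s t hs' ht'; rewrite hs in hs' ht'.
by have [-> ->] := h s t hs' ht'.
Qed.

Lemma order_iso_trans a b c : order_iso a b -> order_iso b c -> order_iso a c.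
Proof.
move=> [h1 H1] [h2 H2]; split; first by rewrite h1.
move=> s t hs ht; have hs' := hs; have ht' := ht; rewrite -h2 in hs' ht'.
by have [-> ->] := H1 s t hs' ht'; have [-> ->] := H2 s t hs ht.
Qed.

Lemma order_iso_gamma a b : order_iso a b -> gamma a = gamma b.
Proof.
move=> [hs h]; apply/esym/gamma_compat => // s t; rewrite hs; exact: h.
Qed.

Lemma order_iso_map (f : nat -> nat) (g : seq nat) (P : pred nat) :
  all P g -> {in P &, forall a b, (f a < f b) = (a < b)} ->
  {in P &, forall a b, (f a == f b) = (a == b)} ->
  order_iso (map f g) g.
Proof.
move=> hP hl he; split; first by rewrite size_map.
move=> s t hs ht; rewrite !(nth_map 0) //.
have Ps : P (nth 0 g s) by apply: (allP hP); apply: mem_nth.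
have Pt : P (nth 0 g t) by apply: (allP hP); apply: mem_nth.
rewrite hl // he //.
Qed.

Lemma count_nth (P : pred nat) (a : seq nat) :
  count P a = count (fun t => P (nth 0 a t)) (iota 0 (size a)).
Proof. by rewrite -[in LHS](mkseq_nth 0 a) /mkseq count_map. Qed.

Lemma count_lt_iota1 v k : 0 < v <= k.+1 -> count (fun u => u < v) (iota 1 k) = v.-1.
Proof.
move=> hv; rewrite (iotaDl 1 0) count_map.
rewrite (eq_count (a2 := fun l => l < v.-1)); last by move=> l /=; rewrite add1n; lia.
rewrite count_ltn_iota0; lia.
Qed.

Lemma perm_iso_eq a b k : perm_eq a (iota 1 k) -> perm_eq b (iota 1 k) ->
  order_iso a b -> a = b.
Proof.
move=> ha hb [hs h].
have sa : size a = k by rewrite (perm_size ha) size_iota.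
apply: (eq_from_nth (x0 := 0)) => // s hsa.
have key : forall c, perm_eq c (iota 1 k) -> s < size c ->
    nth 0 c s = (count (fun u => u < nth 0 c s) c).+1.
  move=> c hc hsc.
  have : nth 0 c s \in c by apply: mem_nth.
  rewrite (perm_mem hc) mem_iota => hv.
  move: h hs => _ _; rewrite (permP hc) count_lt_iota1; lia.
have hsb : s < size b by rewrite -hs.
rewrite (key a ha hsa) (key b hb hsb).
congr S; rewrite (count_nth _ a) (count_nth _ b) hs; apply: eq_in_count_nat => t.
rewrite mem_iota add0n => /andP[_ ht].
by have [-> _] := h t s ht hsb.
Qed.

Lemma wmax_le (x : seq nat) d : all (fun c => c <= d) x -> wmax x <= d.
Proof. by elim: x => //= c x IH /andP[h1 h2]; rewrite geq_max h1 IH. Qed.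

Definition stdz (w : seq nat) :=
  let u := sort leq (undup w) in map (fun a => (index a u).+1) w.

Lemma stdz_props w : is_cayley (stdz w) /\ order_iso w (stdz w).
Proof.
set u := sort leq (undup w).
have hu : uniq u by rewrite sort_uniq undup_uniq.
have hs : sorted ltn u.
  rewrite ltn_sorted_uniq_leq hu /=; apply: sort_sorted; exact: leq_total.
have memu : forall a, (a \in u) = (a \in w) by move=> a; rewrite mem_sort mem_undup.
have key : forall a b, a \in w -> b \in w -> (a <= b) = (index a u <= index b u).
  move=> a b ha hb; rewrite -memu in ha; rewrite -memu in hb.
  have E := @sorted_leq_iff u (index a u) (index b u) hs.
  rewrite (nth_index 0 ha) (nth_index 0 hb) in E.
  by rewrite E // index_mem.
have keyeq : forall a b, a \in w -> b \in w -> (a == b) = (index a u == index b u).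
  move=> a b ha hb; rewrite !eqn_leq key // (key b a) //.
split.
- rewrite /is_cayley; apply/andP; split.
    by apply/allP => c /mapP [a _ ->].
  apply/allP => j; rewrite mem_iota => /andP[j0 jm].
  have hm : wmax (stdz w) <= size u.
    apply: wmax_le; apply/allP => c /mapP [a ha ->].
    by rewrite index_mem memu.
  have hj : j.-1 < size u by lia.
  apply/mapP; exists (nth 0 u j.-1).
    by rewrite -memu; apply: mem_nth.
  rewrite index_uniq //; lia.
- split; first by rewrite /stdz size_map.
  move=> s t hs' ht'; rewrite /stdz size_map in hs' ht'.
  rewrite /stdz !(nth_map 0) //.
  have hsw : nth 0 w s \in w by apply: mem_nth.
  have htw : nth 0 w t \in w by apply: mem_nth.
  by rewrite ltnS !ltnNge -key // eqSS -keyeq.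
Qed.

Lemma restrict_iso x (m : bitseq) : size m = size x ->
  order_iso (filter (mem (mask m (iota 1 (size x)))) (gamma x)) (gamma (mask m x)).
Proof.
move=> sm; rewrite restrict_gamma //.
set U := mask m (iota 1 (size x)).
set w := mask m x.
have hU : sorted ltn U by apply: sorted_mask; [exact: ltn_trans | exact: iota_ltn_sorted].
have szU : size U = size w by rewrite /U /w !size_mask ?size_iota.
apply: (order_iso_map (P := [pred t | 0 < t <= size w])).
- by apply/allP => t; rewrite mem_gamma.
- move=> a b; rewrite !inE => /andP[a0 aw] /andP[b0 bw].
  rewrite !ltnNge sorted_leq_iff // ?szU; try lia.
- move=> a b; rewrite !inE => /andP[a0 aw] /andP[b0 bw].
  rewrite !eqn_leq !sorted_leq_iff // ?szU; try lia.
Qed.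

Lemma contains_mask x (m : bitseq) : size m = size x ->
  contains (gamma x) (gamma (mask m x)).
Proof.
move=> sm.
exists (map (mem (mask m (iota 1 (size x)))) (gamma x)); split; first by rewrite size_map.
by rewrite -filter_mask; apply: restrict_iso.
Qed.

Lemma partA x y :
  (forall z, is_cayley z -> gamma z = gamma y -> avoids x z) <-> avoids (gamma x) (gamma y).
Proof.
split.
- move=> H [m' [sm' hiso]].
  set V := mask m' (gamma x) in hiso.
  set m := map (mem V) (iota 1 (size x)).
  have sm : size m = size x by rewrite size_map size_iota.
  have hR := restrict_iso sm.
  have E : filter (mem (mask m (iota 1 (size x)))) (gamma x) = V.
    rewrite /m -filter_mask.
    rewrite (@eq_in_filter _ _ (mem V)); last first.
      move=> i hi; rewrite /= mem_filter mem_iota.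
      have hi' : 0 < i <= size x by rewrite -mem_gamma.
      have -> : (1 <= i < 1 + size x) by lia.
      by rewrite andbT.
    by rewrite /V -mask_filter ?gamma_uniq.
  rewrite E in hR.
  have I1 := order_iso_trans (order_iso_sym hR) hiso.
  set w := mask m x in hR I1.
  have gw : gamma w = gamma y.
    have [sz _] := I1.
    apply: (@perm_iso_eq _ _ (size w)) => //; first exact: gamma_perm.
    by rewrite -(size_gamma w) sz size_gamma; exact: gamma_perm.
  have [cz iz] := stdz_props w.
  apply: (H (stdz w)) => //; first by rewrite -(order_iso_gamma iz).
  by exists m; split.
- move=> H z cz gz [m [sm hiso]].
  apply: H; rewrite -gz -(order_iso_gamma hiso).
  exact: contains_mask.
Qed.

Lemma perm_inv_props sigma : is_perm sigma ->
  is_cayley (perm_inv sigma) /\ gamma (perm_inv sigma) = sigma.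
Proof.
rewrite /is_perm => hp.
set n := size sigma in hp.
have hu : uniq sigma by rewrite (perm_uniq hp) iota_uniq.
have memS : forall j, (j \in sigma) = (0 < j <= n).
  by move=> j; rewrite (perm_mem hp) mem_iota add1n ltnS.
set q := perm_inv sigma.
have sq : size q = n by rewrite /q /perm_inv size_map size_iota.
have nq : forall a, 0 < a <= n -> nth 0 q a.-1 = (index a sigma).+1.
  move=> a ha; rewrite /q /perm_inv (nth_map 0) ?size_iota; last by lia.
  by rewrite nth_iota; [congr S; congr index; lia | lia].
split.
- apply/andP; split; first by apply/allP => c /mapP [j _ ->].
  apply/allP => j; rewrite mem_iota => /andP[j0 jm].
  have hm : wmax q <= n.
    apply: wmax_le; apply/allP => c /mapP [a ha ->].
    have : a \in sigma by rewrite memS; move: ha; rewrite mem_iota; lia.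
    by rewrite -index_mem.
  apply/mapP; exists (nth 0 sigma j.-1).
    rewrite mem_iota; have : nth 0 sigma j.-1 \in sigma by apply: mem_nth_nat; lia.
    rewrite memS; lia.
  rewrite index_uniq_nat //; lia.
- apply: gamma_charac; first by rewrite sq.
  rewrite -(mkseq_nth 0 sigma) /mkseq sorted_map.
  apply: (sub_in_sorted (P := [pred l | l < n]) (e := ltn)); last exact: iota_ltn_sorted.
    move=> l l'; rewrite !inE => hl hl' hll'.
    have ml : 0 < nth 0 sigma l <= n by rewrite -memS mem_nth_nat.
    have ml' : 0 < nth 0 sigma l' <= n by rewrite -memS mem_nth_nat.
    rewrite /relpre /kl /gamma_rel /= !nq // !index_uniq_nat //.
    by rewrite ltnS; apply/orP; left.
  by apply/allP => l; rewrite mem_iota.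
Qed.

Lemma part2 y p :
  gamma_image (avoid_class modasc y) p <-> fishburn_avoiding (gamma y) p.
Proof.
split.
- move=> [x [[hx hav] <-]]; split.
    by have [_ _ _ hM] := modasc_inv hx; apply: B1.
  exact/partA.
- move=> [hf hav].
  have [x [hx gx]] := B2 hf (erefl (size p)).
  exists x; split => //; split => //.
  by apply/partA; rewrite gx.
Qed.

Unset Implicit Arguments.

Theorem theorem5p1 (sigma y : seq nat) :
  is_perm sigma -> is_cayley y ->
  (forall p, fishburn_avoiding sigma p <->
             gamma_image (avoid_class modasc (perm_inv sigma)) p) /\
  (forall p, gamma_image (avoid_class modasc y) p <->
             fishburn_avoiding (gamma y) p).
Proof.
move=> hs _; split; last exact: part2.
move=> p; have [_ g] := perm_inv_props hs.
by rewrite part2 g.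
Qed.
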